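(* Let $f: E \to \Delta[n]$ be a surjective map of simplicial sets and let $\alpha$ be a vertex of the barycentric subdivision $\Delta'[n]$, i.e. a non-degenerate face $\alpha: \Delta[k] \hookrightarrow \Delta[n]$. Then the inclusion $Sdf^{-1}(\alpha) \hookrightarrow ESt(\alpha)$ is a homotopy equivalence.
   Context: The barycentric subdivision $\Delta'[n]$ is the simplicial set whose $q$-simplices are chains $\mu=(\mu_0,\dots,\mu_q)$ of non-degenerate faces $\mu_i:\Delta[k_i]\hookrightarrow\Delta[n]$ with $\mathrm{Im}\,\mu_i\subseteq\mathrm{Im}\,\mu_{i+1}$, with simplicial operator $\theta:[q']\to[q]$ acting by $\mu\mapsto(\mu_{\theta(0)},\dots,\mu_{\theta(q')})$; it is functorial in $n$. For a simplicial set $E$, the subdivision is $SdE=\mathrm{colim}_{\Delta E}\Delta'[p]$ over the simplex category of $E$; its $q$-simplices are classes $[x,\mu]$ with $x$ a $p$-simplex of $E$ and $\mu$ a $q$-simplex of $\Delta'[p]$. For $f:E\to\Delta[n]$, the map $Sdf: SdE\to\Delta'[n]$ sends $[x,\mu]$ to $(\nu_0,\dots,\nu_q)$, where $f\circ x\circ\mu_i:\Delta[k_i]\to\Delta[n]$ is factored uniquely as a surjection $\Delta[k_i]\to\Delta[l_i]$ followed by an injection $\nu_i:\Delta[l_i]\hookrightarrow\Delta[n]$. $Sdf^{-1}(\alpha)$ is the preimage under $Sdf$ of the vertex $\alpha$ (the simplices mapping to degeneracies of $\alpha$). The star $St(\alpha)\subseteq\Delta'[n]$ is the subspace of simplices $(\mu_0,\dots,\mu_p)$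 with $\mathrm{Im}\,\mu_i\supseteq\mathrm{Im}\,\alpha$ for all $i$, and $ESt(\alpha)=Sdf^{-1}(St(\alpha))$. *)

(* Defs.v *)
From Stdlib Require Import Relations ClassicalEpsilon.
From mathcomp Require Import all_boot.

Set Implicit Arguments.
Unset Strict Implicit.
Unset Printing Implicit Defensive.

Definition monob (p q : nat) (f : {ffun 'I_p.+1 -> 'I_q.+1}) : bool :=
  [forall i : 'I_p.+1, forall j : 'I_p.+1, (i <= j) ==> (f i <= f j)].

Definition Dmor (p q : nat) := {f : {ffun 'I_p.+1 -> 'I_q.+1} | monob f}.

Lemma monobP (p q : nat) (f : {ffun 'I_p.+1 -> 'I_q.+1}) :
  reflect (forall i j : 'I_p.+1, i <= j -> f i <= f j) (monob f).
Proof.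
apply: (iffP forallP) => [H i j lij | H i].
  by move/forallP: (H i) => /(_ j) /implyP; apply.
by apply/forallP => j; apply/implyP; exact: H.
Qed.

Lemma did_mono (q : nat) : monob [ffun i : 'I_q.+1 => i].
Proof. by apply/monobP => i j lij; rewrite !ffunE. Qed.

Definition did (q : nat) : Dmor q q := exist (@monob q q) _ (did_mono q).

Lemma dcomp_mono (p q r : nat) (g : Dmor q r) (f : Dmor p q) :
  monob [ffun i => sval g (sval f i)].
Proof.
apply/monobP => i j lij; rewrite !ffunE.
apply: (elimT (monobP _) (proj2_sig g)).
exact: (elimT (monobP _) (proj2_sig f)).
Qed.

Definition dcomp (p q r : nat) (g : Dmor q r) (f : Dmor p q) : Dmor p r :=
  exist (@monob p r) _ (dcomp_mono g f).

Lemma dcst_mono (q : nat) (b : 'I_2) : monob [ffun _ : 'I_q.+1 => b].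
Proof. by apply/monobP => i j _; rewrite !ffunE. Qed.

Definition dcst (q : nat) (b : 'I_2) : Dmor q 1 := exist (@monob q 1) _ (dcst_mono q b).

Record sSet := SSet {
  ssimp : nat -> Type ;
  sact : forall p q : nat, Dmor p q -> ssimp q -> ssimp p }.
Arguments sact s {p q} _ _.

Definition is_sSet (E : sSet) : Prop :=
  (forall q (x : ssimp E q), sact E (did q) x = x) /\
  (forall p q r (f : Dmor p q) (g : Dmor q r) (x : ssimp E r),
      sact E f (sact E g x) = sact E (dcomp g f) x).

(** A simplicial map E -> Delta[n]; the q-simplices of Delta[n] are [Dmor q n]
    and a simplicial operator acts by precomposition. *)
Definition to_simplex_natural (E : sSet) (n : nat)
  (f : forall q, ssimp E q -> Dmor q n) : Prop :=
  forall p q (th : Dmor p q) (x : ssimp E q),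
    f p (sact E th x) = dcomp (f q x) th.

Definition to_simplex_surjective (E : sSet) (n : nat)
  (f : forall q, ssimp E q -> Dmor q n) : Prop :=
  forall q (y : Dmor q n), exists x : ssimp E q, f q x = y.

(** * Barycentric subdivision Delta'[p]
    A non-degenerate face of Delta[p] is determined by its image, a nonempty
    subset of 'I_p.+1.  A q-simplex of Delta'[p] is a chain
    mu_0 <= ... <= mu_q of such faces (by inclusion of images). *)

Definition chainb (p q : nat) (s : {ffun 'I_q.+1 -> {set 'I_p.+1}}) : bool :=
  [forall i, s i != set0] &&
  [forall i : 'I_q.+1, forall j : 'I_q.+1, (i <= j) ==> (s i \subset s j)].

Definition Sdn (p q : nat) := {s : {ffun 'I_q.+1 -> {set 'I_p.+1}} | chainb s}.

Lemma chainbP (p q : nat) (s : {ffun 'I_q.+1 -> {set 'I_p.+1}}) :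
  reflect ((forall i, s i != set0) /\
           (forall i j : 'I_q.+1, i <= j -> s i \subset s j)) (chainb s).
Proof.
apply: (iffP andP) => [[/forallP H1 /forallP H2] | [H1 H2]]; split.
- exact: H1.
- by move=> i j lij; move/forallP: (H2 i) => /(_ j) /implyP; apply.
- exact/forallP.
- by apply/forallP => i; apply/forallP => j; apply/implyP; exact: H2.
Qed.

Lemma sd_map_chain (p p' q : nat) (th : Dmor p p') (mu : Sdn p q) :
  chainb [ffun i => (fun k => sval th k) @: sval mu i].
Proof.
have /chainbP [H1 H2] := proj2_sig mu.
apply/chainbP; split=> [i | i j lij]; rewrite !ffunE.
  by rewrite imset_eq0.
exact/imsetS/H2.
Qed.

(** functoriality of Delta'[-]: a face mu_i is sent to (the non-degenerate
    part of) th \o mu_i, i.e. to the image th(mu_i). *)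
Definition sd_map (p p' q : nat) (th : Dmor p p') (mu : Sdn p q) : Sdn p' q :=
  exist (@chainb p' q) _ (sd_map_chain th mu).

Lemma sd_re_chain (p q q' : nat) (mu : Sdn p q) (th : Dmor q' q) :
  chainb [ffun j => sval mu (sval th j)].
Proof.
have /chainbP [H1 H2] := proj2_sig mu.
apply/chainbP; split=> [i | i j lij]; rewrite !ffunE.
  exact: H1.
apply: H2; exact: (elimT (monobP _) (proj2_sig th)).
Qed.

Definition sd_re (p q q' : nat) (mu : Sdn p q) (th : Dmor q' q) : Sdn p q' :=
  exist (@chainb p q') _ (sd_re_chain mu th).

(** * Subdivision SdE = colim_{Delta E} Delta'[p]
    q-simplices: pairs (x, mu), x a p-simplex of E, mu a q-simplex of
    Delta'[p], modulo the equivalence relation generated by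
    (th^* y, mu) ~ (y, Delta'[th] mu). *)

Section Subdivision.
Variable E : sSet.

Definition pre (q : nat) := {p : nat & (ssimp E p * Sdn p q)%type}.

Inductive sd_step (q : nat) : pre q -> pre q -> Prop :=
| SdStep : forall p p' (th : Dmor p p') (y : ssimp E p') (mu : Sdn p q),
    sd_step (existT _ p (sact E th y, mu)) (existT _ p' (y, sd_map th mu)).

Definition sd_eqv (q : nat) : relation (pre q) :=
  clos_refl_sym_trans (pre q) (@sd_step q).

Definition sd_cls (q : nat) (a : pre q) : pre q -> Prop := sd_eqv a.

Definition SdE_simp (q : nat) := {C : pre q -> Prop | exists a, C = sd_cls a}.

Definition sd_rep (q : nat) (C : SdE_simp q) : pre q :=
  proj1_sig (constructive_indefinite_description _ (proj2_sig C)).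

Definition pre_act (q q' : nat) (th : Dmor q' q) (a : pre q) : pre q' :=
  existT _ (projT1 a) ((projT2 a).1, sd_re (projT2 a).2 th).

Definition SdE_act (q' q : nat) (th : Dmor q' q) (C : SdE_simp q) : SdE_simp q' :=
  exist _ (sd_cls (pre_act th (sd_rep C))) (ex_intro _ _ erefl).

Definition SdE : sSet := SSet SdE_act.

End Subdivision.

(** Sdf : SdE -> Delta'[n],  [x, mu] |-> (nu_0, ..., nu_q) with
    nu_i the non-degenerate part of f(x) \o mu_i, i.e. its image. *)
Definition Sdf (E : sSet) (n : nat) (f : forall q, ssimp E q -> Dmor q n)
  (q : nat) (C : ssimp (SdE E) q) : Sdn n q :=
  let a := sd_rep C in sd_map (f (projT1 a) (projT2 a).1) (projT2 a).2.

(** Sdf^{-1}(alpha): simplices sent to a degeneracy of the vertex alpha *)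
Definition Sd_fiber (E : sSet) (n : nat) (f : forall q, ssimp E q -> Dmor q n)
  (alpha : {set 'I_n.+1}) (q : nat) (C : ssimp (SdE E) q) : Prop :=
  forall i, sval (Sdf f C) i = alpha.

(** ESt(alpha) = Sdf^{-1}(St(alpha)) *)
Definition ESt (E : sSet) (n : nat) (f : forall q, ssimp E q -> Dmor q n)
  (alpha : {set 'I_n.+1}) (q : nat) (C : ssimp (SdE E) q) : Prop :=
  forall i, alpha \subset sval (Sdf f C) i.

(** Sub-simplicial sets are given by predicates on the simplices of X; maps
    between them are families of functions on X restricted to the predicate. *)

Section Homotopy.
Variable X : sSet.

Definition natural_on (B : forall q, ssimp X q -> Prop)
  (g : forall q, ssimp X q -> ssimp X q) : Prop :=
  forall p q (th : Dmor p q) (x : ssimp X q),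
    B q x -> g p (sact X th x) = sact X th (g q x).

Definition maps_into (B T : forall q, ssimp X q -> Prop)
  (g : forall q, ssimp X q -> ssimp X q) : Prop :=
  forall q (x : ssimp X q), B q x -> T q (g q x).

(** elementary simplicial homotopy B x Delta[1] -> T from g0 to g1;
    the q-simplices of Delta[1] are [Dmor q 1]. *)
Definition elem_htpy (B T : forall q, ssimp X q -> Prop)
  (g0 g1 : forall q, ssimp X q -> ssimp X q) : Prop :=
  exists H : forall q, ssimp X q -> Dmor q 1 -> ssimp X q,
    (forall q x t, B q x -> T q (H q x t)) /\
    (forall p q (th : Dmor p q) x t,
        B q x -> H p (sact X th x) (dcomp t th) = sact X th (H q x t)) /\
    (forall q x, B q x -> H q x (dcst q ord0) = g0 q x) /\
    (forall q x, B q x -> H q x (dcst q ord_max) = g1 q x).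

Definition htpic (B T : forall q, ssimp X q -> Prop) :
  relation (forall q, ssimp X q -> ssimp X q) :=
  clos_refl_sym_trans _ (elem_htpy B T).

Definition incl_htpy_equiv (A B : forall q, ssimp X q -> Prop) : Prop :=
  (forall q x, A q x -> B q x) /\
  exists r : forall q, ssimp X q -> ssimp X q,
    natural_on B r /\ maps_into B A r /\
    htpic A A r (fun q x => x) /\
    htpic B B r (fun q x => x).

End Homotopy.

(* Main.v *)
Require Import Defs.
From mathcomp Require Import all_boot.
From Stdlib Require Import Relations ClassicalEpsilon FunctionalExtensionality PropExtensionality ProofIrrelevance.

Set Implicit Arguments.
Unset Strict Implicit.
Unset Printing Implicit Defensive.

Lemma sig_eq (A : Type) (P : A -> Prop) (x y : sig P) : sval x = sval y -> x = y.
Proof.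
case: x => x px; case: y => y py /= e; subst y.
by rewrite (proof_irrelevance _ px py).
Qed.

Section Cls.
Variable E : sSet.

Definition cls (q : nat) (a : pre E q) : SdE_simp E q :=
  exist _ (sd_cls a) (ex_intro _ a erefl).

Lemma eqv_refl q (a : pre E q) : sd_eqv a a.
Proof. exact: rst_refl. Qed.
Lemma eqv_sym q (a b : pre E q) : sd_eqv a b -> sd_eqv b a.
Proof. exact: rst_sym. Qed.
Lemma eqv_trans q (a b c : pre E q) : sd_eqv a b -> sd_eqv b c -> sd_eqv a c.
Proof. exact: rst_trans. Qed.

Lemma cls_eq q (a b : pre E q) : sd_eqv a b -> cls a = cls b.
Proof.
move=> h; apply: sig_eq => /=.
apply: functional_extensionality => c; apply: propositional_extensionality.
rewrite /sd_cls; split => h'.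
  exact: eqv_trans (eqv_sym h) h'.
exact: eqv_trans h h'.
Qed.

Lemma rep_spec q (C : SdE_simp E q) : sval C = sd_cls (sd_rep C).
Proof. exact: (proj2_sig (constructive_indefinite_description _ (proj2_sig C))). Qed.

Lemma cls_rep q (C : SdE_simp E q) : cls (sd_rep C) = C.
Proof. by apply: sig_eq => /=; rewrite -rep_spec. Qed.

Lemma rep_cls q (a : pre E q) : sd_eqv (sd_rep (cls a)) a.
Proof.
have := rep_spec (cls a) => /= e.
have h := equal_f e (sd_rep (cls a)); rewrite /sd_cls in h.
by apply: eqv_sym; rewrite h; apply: eqv_refl.
Qed.
End Cls.

Section Main.
Variables (E : sSet) (n : nat) (f : forall q, ssimp E q -> Dmor q n).
Hypothesis fnat : to_simplex_natural f.
Variables (alpha : {set 'I_n.+1}).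
Hypothesis Halpha : alpha != set0.

Definition lift q q' (phi : forall p, Dmor p n -> Sdn p q -> Sdn p q') (a : pre E q) : pre E q' :=
  existT _ (projT1 a) ((projT2 a).1, phi (projT1 a) (f (projT2 a).1) (projT2 a).2).

Lemma lift_compat q q' (phi : forall p, Dmor p n -> Sdn p q -> Sdn p q')
  (Hphi : forall p p' (th : Dmor p p') (g : Dmor p' n) mu,
     sd_map th (phi p (dcomp g th) mu) = phi p' g (sd_map th mu))
  (a b : pre E q) : sd_eqv a b -> sd_eqv (lift phi a) (lift phi b).
Proof.
elim=> [x y [p p' th y' mu]|x|x y _ h|x y z _ h1 _ h2].
- rewrite /lift /= fnat; apply: rst_step; rewrite -Hphi; exact: SdStep.
- exact: rst_refl.
- exact: rst_sym.
- exact: rst_trans h1 h2.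
Qed.

Definition F q (a : pre E q) : Sdn n q := sd_map (f (projT2 a).1) (projT2 a).2.

Lemma dcomp_imset p p' (g : Dmor p' n) (th : Dmor p p') (A : {set 'I_p.+1}) :
  [set sval (dcomp g th) k | k in A] = [set sval g k | k in [set sval th k | k in A]].
Proof. rewrite -imset_comp; apply: eq_imset => k; by rewrite /= ffunE. Qed.

Lemma F_compat q (a b : pre E q) : sd_eqv a b -> F a = F b.
Proof.
elim=> [x y [p p' th y' mu]|x|x y _ h|x y z _ h1 _ h2] //.
- rewrite /F /= fnat; apply: sig_eq => /=; apply/ffunP => i; rewrite !ffunE.
  exact: dcomp_imset.
- by rewrite h1 h2.
Qed.

Lemma Sdf_cls q (a : pre E q) : Sdf f (cls a) = F a.
Proof. exact: F_compat (rep_cls a). Qed.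

Lemma imset_preim p p' (g : Dmor p' n) (th : Dmor p p') (A : {set 'I_p.+1}) :
  [set sval th k | k in A :&: [set k | sval (dcomp g th) k \in alpha]] =
  [set sval th k | k in A] :&: [set k | sval g k \in alpha].
Proof.
apply/setP => k; apply/imsetP/setIP.
  case=> m /setIP [mA]; rewrite inE /= ffunE => ma ->.
  by split; [apply/imsetP; exists m | rewrite inE].
case=> /imsetP [m mA ->]; rewrite inE => ma.
by exists m => //; rewrite !inE mA /= ffunE.
Qed.

Definition sprime p q (g : Dmor p n) (mu : Sdn p q) : {ffun 'I_q.+1 -> {set 'I_p.+1}} :=
  [ffun i => sval mu i :&: [set k | sval g k \in alpha]].

Definition nu p q (g : Dmor p n) (mu : Sdn p q) : Sdn p q := insubd mu (sprime g mu).

Lemma sprime_chain p q (g : Dmor p n) (mu : Sdn p q) :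
  chainb (sprime g mu) = [forall i, sprime g mu i != set0].
Proof.
rewrite /chainb; have /chainbP [_ H2] := proj2_sig mu.
have -> : [forall i : 'I_q.+1, forall j : 'I_q.+1, (i <= j) ==> (sprime g mu i \subset sprime g mu j)].
  apply/forallP => i; apply/forallP => j; apply/implyP => lij; rewrite !ffunE.
  exact/setSI/H2.
by rewrite andbT.
Qed.

Lemma nu_val p q (g : Dmor p n) (mu : Sdn p q) :
  sval (nu g mu) = if [forall i, sprime g mu i != set0] then sprime g mu else sval mu.
Proof. rewrite -sprime_chain; exact: val_insubd. Qed.

Lemma nu_compat p p' q (th : Dmor p p') (g : Dmor p' n) (mu : Sdn p q) :
  sd_map th (nu (dcomp g th) mu) = nu g (sd_map th mu).
Proof.
apply: sig_eq; rewrite /= !nu_val.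
have e : sprime g (sd_map th mu) = [ffun i => [set sval th k | k in sprime (dcomp g th) mu i]].
  by apply/ffunP => i; rewrite !ffunE imset_preim.
have ec : [forall i, sprime g (sd_map th mu) i != set0] = [forall i, sprime (dcomp g th) mu i != set0].
  by rewrite e; apply: eq_forallb => i; rewrite ffunE imset_eq0.
rewrite ec; case: ifP => _; apply/ffunP => i; rewrite !ffunE //.
exact: imset_preim.
Qed.

Lemma nu_sub p q (g : Dmor p n) (mu : Sdn p q) i : sval (nu g mu) i \subset sval mu i.
Proof. rewrite nu_val; case: ifP => _; by rewrite ?ffunE ?subsetIl ?subxx. Qed.

Definition hs p q (t : Dmor q 1) (g : Dmor p n) (mu : Sdn p q) : {ffun 'I_q.+1 -> {set 'I_p.+1}} :=
  [ffun j => if sval t j == ord0 then sval (nu g mu) j else sval mu j].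

Lemma hs_chain p q (t : Dmor q 1) (g : Dmor p n) (mu : Sdn p q) : chainb (hs t g mu).
Proof.
have /chainbP [M1 M2] := proj2_sig mu.
have /chainbP [N1 N2] := proj2_sig (nu g mu).
have T := elimT (monobP _) (proj2_sig t).
apply/chainbP; split=> [i | i j lij]; rewrite !ffunE.
  by case: ifP.
have := T _ _ lij.
case: ifP => /eqP ti; case: ifP => /eqP tj.
- by move=> _; exact: N2.
- move=> _; apply: subset_trans (N2 _ _ lij) (nu_sub _ _ _).
- rewrite tj => h; exfalso; apply: ti; apply/val_inj => /=.
  by move: h; rewrite leqn0 => /eqP.
- by move=> _; exact: M2.
Qed.

Definition hmap p q (t : Dmor q 1) (g : Dmor p n) (mu : Sdn p q) : Sdn p q :=
  exist _ (hs t g mu) (hs_chain t g mu).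

Lemma hmap_compat q (t : Dmor q 1) p p' (th : Dmor p p') (g : Dmor p' n) (mu : Sdn p q) :
  sd_map th (hmap t (dcomp g th) mu) = hmap t g (sd_map th mu).
Proof.
apply: sig_eq; apply/ffunP => j; rewrite /= !ffunE; case: ifP => _ //.
by rewrite -nu_compat /= ffunE.
Qed.

Lemma re_compat q q' (th' : Dmor q' q) p p' (th : Dmor p p') (g : Dmor p' n) (mu : Sdn p q) :
  sd_map th (sd_re mu th') = sd_re (sd_map th mu) th'.
Proof. by apply: sig_eq; apply/ffunP => j; rewrite /= !ffunE. Qed.

Definition Rpre q := lift (fun p (g : Dmor p n) (mu : Sdn p q) => nu g mu).
Definition Hpre q (t : Dmor q 1) := lift (fun p (g : Dmor p n) (mu : Sdn p q) => hmap t g mu).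

Lemma R_compat q (a b : pre E q) : sd_eqv a b -> sd_eqv (Rpre a) (Rpre b).
Proof. apply: lift_compat => *; exact: nu_compat. Qed.
Lemma H_compat q t (a b : pre E q) : sd_eqv a b -> sd_eqv (Hpre t a) (Hpre t b).
Proof. apply: lift_compat => *; exact: hmap_compat. Qed.
Lemma act_compat q q' (th : Dmor q' q) (a b : pre E q) :
  sd_eqv a b -> sd_eqv (pre_act th a) (pre_act th b).
Proof. exact: (@lift_compat q q' (fun p g mu => sd_re mu th) (fun p p' th0 g mu => re_compat th th0 g mu)). Qed.

Definition cond p q (g : Dmor p n) (mu : Sdn p q) :=
  forall i, alpha \subset [set sval g k | k in sval mu i].

Lemma sprime_ne p q (g : Dmor p n) (mu : Sdn p q) : cond g mu ->
  [forall i, sprime g mu i != set0].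
Proof.
move=> h; apply/forallP => i; have [k ka] := set0Pn _ Halpha.
have /imsetP [m mm ek] := subsetP (h i) k ka.
by apply/set0Pn; exists m; rewrite ffunE !inE mm -ek ka.
Qed.

Lemma sprime_im p q (g : Dmor p n) (mu : Sdn p q) i : cond g mu ->
  [set sval g k | k in sprime g mu i] = alpha.
Proof.
move=> h; apply/eqP; rewrite eqEsubset; apply/andP; split.
  by apply/subsetP => k /imsetP [m]; rewrite ffunE !inE => /andP [_ ma] ->.
apply/subsetP => k ka; have /imsetP [m mm ek] := subsetP (h i) k ka.
by apply/imsetP; exists m => //; rewrite ffunE !inE mm -ek ka.
Qed.

Lemma nu_val2 p q (g : Dmor p n) (mu : Sdn p q) : cond g mu -> sval (nu g mu) = sprime g mu.
Proof. by move=> h; rewrite nu_val sprime_ne. Qed.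

Lemma nu_re p q q' (g : Dmor p n) (mu : Sdn p q) (th : Dmor q' q) : cond g mu ->
  nu g (sd_re mu th) = sd_re (nu g mu) th.
Proof.
move=> h; have h' : cond g (sd_re mu th) by move=> j; rewrite /= ffunE.
apply: sig_eq; rewrite nu_val2 //=; apply/ffunP => j.
by rewrite !ffunE nu_val2 // ffunE.
Qed.

Definition estc q (a : pre E q) := cond (f (projT2 a).1) (projT2 a).2.

Lemma estc_F q (a : pre E q) : (forall i, alpha \subset sval (F a) i) -> estc a.
Proof. by move=> h i; have := h i; rewrite /F /= ffunE. Qed.

Lemma R_act q q' (th : Dmor q' q) (a : pre E q) : estc a ->
  Rpre (pre_act th a) = pre_act th (Rpre a).
Proof. case: a => p [x mu] h; rewrite /Rpre /lift /pre_act /=; by rewrite nu_re. Qed.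

Lemma H_act q q' (th : Dmor q' q) (t : Dmor q 1) (a : pre E q) : estc a ->
  Hpre (dcomp t th) (pre_act th a) = pre_act th (Hpre t a).
Proof.
case: a => p [x mu] h; rewrite /Hpre /lift /pre_act /=; congr existT; congr pair.
apply: sig_eq; apply/ffunP => j; rewrite /= !ffunE.
by rewrite nu_re //= ffunE.
Qed.

Lemma R_F q (a : pre E q) i : estc a -> sval (F (Rpre a)) i = alpha.
Proof. case: a => p [x mu] h; rewrite /F /Rpre /lift /= ffunE nu_val2 //; exact: sprime_im. Qed.

Lemma H_F q t (a : pre E q) i : estc a ->
  sval (F (Hpre t a)) i = if sval t i == ord0 then alpha else sval (F a) i.
Proof.
case: a => p [x mu] h; rewrite /F /Hpre /lift /= !ffunE.
case: ifP => _ //; rewrite nu_val2 //; exact: sprime_im.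
Qed.

Lemma H0 q (a : pre E q) : Hpre (dcst q ord0) a = Rpre a.
Proof.
case: a => p [x mu]; rewrite /Hpre /Rpre /lift /=; congr existT; congr pair.
by apply: sig_eq; apply/ffunP => j; rewrite /= !ffunE eqxx.
Qed.

Lemma H1 q (a : pre E q) : Hpre (dcst q ord_max) a = a.
Proof.
case: a => p [x mu]; rewrite /Hpre /lift /=; congr existT; congr pair.
by apply: sig_eq; apply/ffunP => j; rewrite /= !ffunE.
Qed.

End Main.

Theorem lemma4p2 (E : sSet) (HE : is_sSet E) (n : nat)
  (f : forall q, ssimp E q -> Dmor q n)
  (fnat : to_simplex_natural f) (fsurj : to_simplex_surjective f)
  (alpha : {set 'I_n.+1}) (Halpha : alpha != set0) :
  incl_htpy_equiv (Sd_fiber f alpha) (ESt f alpha).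
Proof.
have estE : forall q (C : ssimp (SdE E) q), ESt f alpha C -> estc f alpha (sd_rep C).
  by move=> q C h; apply: estc_F.
have fibE : forall q (C : ssimp (SdE E) q), Sd_fiber f alpha C -> ESt f alpha C.
  by move=> q C h i; rewrite h.
split; first exact: fibE.
exists (fun q (C : ssimp (SdE E) q) => cls (Rpre f alpha (sd_rep C))).
have nat_r : natural_on (ESt f alpha) (fun q (C : ssimp (SdE E) q) => cls (Rpre f alpha (sd_rep C))).
  move=> p q th C hC; change (cls (Rpre f alpha (sd_rep (cls (pre_act th (sd_rep C))))) =
     cls (pre_act th (sd_rep (cls (Rpre f alpha (sd_rep C)))))).
  rewrite (cls_eq (R_compat fnat alpha (rep_cls _))) (cls_eq (act_compat fnat th (rep_cls _))).
  by rewrite R_act //; apply: estE.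
have Hh : forall (B : forall q, ssimp (SdE E) q -> Prop),
    (forall q C, B q C -> ESt f alpha C) ->
    (forall q C t, B q C -> B q (cls (Hpre f alpha t (sd_rep C)))) ->
    elem_htpy B B (fun q (C : ssimp (SdE E) q) => cls (Rpre f alpha (sd_rep C))) (fun q x => x).
  move=> B BE BH.
  exists (fun q (C : ssimp (SdE E) q) t => cls (Hpre f alpha t (sd_rep C))).
  split; first exact: BH.
  split.
    move=> p q th C t hC.
    change (cls (Hpre f alpha (dcomp t th) (sd_rep (cls (pre_act th (sd_rep C))))) =
     cls (pre_act th (sd_rep (cls (Hpre f alpha t (sd_rep C)))))).
    rewrite (cls_eq (H_compat fnat alpha _ (rep_cls _))) (cls_eq (act_compat fnat th (rep_cls _))).
    by rewrite H_act //; apply/estE/BE.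
  split=> q C _; first by rewrite H0.
  by rewrite H1 cls_rep.
split; first exact: nat_r.
split.
  move=> q C hC i; rewrite Sdf_cls //; apply: R_F => //; exact: estE.
split; apply: rst_step; apply: Hh => //.
- move=> q C t hC i; rewrite Sdf_cls // H_F //; last by apply/estE/fibE.
  by case: ifP => _ //; apply: hC.
- move=> q C t hC i; rewrite Sdf_cls // H_F //; last by apply/estE.
  by case: ifP => _ //; apply: hC.
Qed.
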